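(* Let $G$ be a cubical $\omega$-category with connections, $n\ge1$, and $1\le j\le n-1$. For an $n$-shell $z=(z^-_1,z^+_1,\dots,z^-_n,z^+_n)$ define $\psi_jz=w=(w^\alpha_i)$ by: $w^\alpha_i=\psi_{j-1}z^\alpha_i$ for $i<j$; $w^-_j=z^-_j\circ_jz^+_{j+1}$; $w^+_j=z^-_{j+1}\circ_jz^+_j$; $w^\alpha_{j+1}=\varepsilon_j\partial^\alpha_jz^\alpha_{j+1}$; $w^\alpha_i=\psi_jz^\alpha_i$ for $i>j+1$. Then all these composites are defined, $\psi_jz$ is again an $n$-shell, and $\psi_j\partial=\partial\psi_j:G_n\to\square G_{n-1}$, where $\partial x=(\partial^-_1x,\partial^+_1x,\dots,\partial^-_nx,\partial^+_nx)$.
   Context: A cubical $\omega$-category with connections $G$ consists of sets $G_n$ ($n\ge0$), face maps $\partial^\alpha_i:G_n\to G_{n-1}$, degeneracies $\varepsilon_i:G_{n-1}\to G_n$, connections $\Gamma^\alpha_i:G_n\to G_{n+1}$ ($1\le i\le n$, $\alpha=\pm$) and partial compositions $\circ_j$ on $G_n$ ($1\le j\le n$, $a\circ_jb$ defined iff $\partial^+_ja=\partial^-_jb$) satisfying: $\partial^\alpha_i\partial^\beta_j=\partial^\beta_{j-1}\partial^\alpha_i$ ($i<j$), $\varepsilon_i\varepsilon_j=\varepsilon_{j+1}\varepsilon_i$ ($i\le j$), $\partial^\alpha_i\varepsilon_j=\varepsilon_{j-1}\partial^\alpha_i$ ($i<j$), $\varepsilon_j\partial^\alpha_{i-1}$ ($i>j$),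 $\mathrm{id}$ ($i=j$); $\Gamma^\alpha_i\Gamma^\beta_j=\Gamma^\beta_{j+1}\Gamma^\alpha_i$ ($i<j$), $\Gamma^\alpha_i\Gamma^\alpha_i=\Gamma^\alpha_{i+1}\Gamma^\alpha_i$, $\Gamma^\alpha_i\varepsilon_j=\varepsilon_{j+1}\Gamma^\alpha_i$ ($i<j$), $\varepsilon_j\Gamma^\alpha_{i-1}$ ($i>j$), $\Gamma^\alpha_j\varepsilon_j=\varepsilon_{j+1}\varepsilon_j$, $\partial^\alpha_i\Gamma^\beta_j=\Gamma^\beta_{j-1}\partial^\alpha_i$ ($i<j$), $\Gamma^\beta_j\partial^\alpha_{i-1}$ ($i>j+1$), $\partial^\alpha_j\Gamma^\alpha_j=\partial^\alpha_{j+1}\Gamma^\alpha_j=\mathrm{id}$, $\partial^\alpha_j\Gamma^{-\alpha}_j=\partial^\alpha_{j+1}\Gamma^{-\alpha}_j=\varepsilon_j\partial^\alpha_j$; $\partial^-_j(a\circ_jb)=\partial^-_ja$, $\partial^+_j(a\circ_jb)=\partial^+_jb$, $\partial^\alpha_i(a\circ_jb)=\partial^\alpha_ia\circ_{j-1}\partial^\alpha_ib$ ($i<j$), $\partial^\alpha_ia\circ_j\partial^\alpha_ib$ ($i>j$); interchange $(a\circ_ib)\circ_j(c\circ_id)=(a\circ_jc)\circ_i(b\circ_jd)$ for $i\ne j$; $\varepsilon_i(a\circ_jb)=\varepsilon_ia\circ_{j+1}\varepsilon_ib$ ($i\le j$), $\varepsilon_ia\circ_j\varepsilon_ib$ ($i>j$);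 $\Gamma^\alpha_i(a\circ_jb)=\Gamma^\alpha_ia\circ_{j+1}\Gamma^\alpha_ib$ ($i<j$), $\Gamma^\alpha_ia\circ_j\Gamma^\alpha_ib$ ($i>j$); $\Gamma^+_j(a\circ_jb)=(\Gamma^+_ja\circ_j\varepsilon_ja)\circ_{j+1}(\varepsilon_{j+1}a\circ_j\Gamma^+_jb)$, $\Gamma^-_j(a\circ_jb)=(\Gamma^-_ja\circ_j\varepsilon_{j+1}b)\circ_{j+1}(\varepsilon_jb\circ_j\Gamma^-_jb)$; each $\circ_j$ is a category structure with identities $\varepsilon_jy$; $\Gamma^+_ix\circ_i\Gamma^-_ix=\varepsilon_{i+1}x$, $\Gamma^+_ix\circ_{i+1}\Gamma^-_ix=\varepsilon_ix$. Folding operation on $G_m$: $\psi_ix=\Gamma^+_i\partial^-_{i+1}x\circ_{i+1}x\circ_{i+1}\Gamma^-_i\partial^+_{i+1}x$ for $1\le i\le m-1$. An $n$-shell in $G$ is a $2n$-tuple $z=(z^-_1,z^+_1,\dots,z^-_n,z^+_n)$ of elements of $G_{n-1}$ with $\partial^\alpha_iz^\beta_j=\partial^\beta_{j-1}z^\alpha_i$ whenever $i<j$; the set of $n$-shells is $\square G_{n-1}$. *)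

(* Defs.v *)
From mathcomp Require Import all_boot.



Unset Printing Implicit Defensive.

(* Conventions:
   - signs alpha = +/- are booleans: true = +, false = -; -alpha = ~~ alpha.
   - indices are 1-based naturals, as in the paper.
   - face m i a : G_(m+1) -> G_m            is  d^a_i,  meaningful for 1 <= i <= m+1
   - degen m i  : G_m -> G_(m+1)            is  eps_i,  meaningful for 1 <= i <= m+1
   - conn m i a : G_m -> G_(m+1)            is  Gamma^a_i, meaningful for 1 <= i <= m
   - comp m j   : G_m -> G_m -> G_m         is  o_j,    meaningful for 1 <= j <= m
   The operations are total functions; the axioms only constrain them on the
   ranges of indices where they are defined, and the partial composition a o_j b
   is only constrained when it is defined (d^+_j a = d^-_j b). *)

Record CubCat := {
  G : nat -> Type;
  face : forall m : nat, nat -> bool -> G m.+1 -> G m;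
  degen : forall m : nat, nat -> G m -> G m.+1;
  conn : forall m : nat, nat -> bool -> G m -> G m.+1;
  comp : forall m : nat, nat -> G m -> G m -> G m;

  ax_face_face : forall m i j a b (x : G m.+2), 1 <= i -> i < j -> j <= m.+2 ->
    face m i a (face m.+1 j b x) = face m j.-1 b (face m.+1 i a x);
  ax_degen_degen : forall m i j (x : G m), 1 <= i -> i <= j -> j <= m.+1 ->
    degen m.+1 i (degen m j x) = degen m.+1 j.+1 (degen m i x);
  ax_face_degen_lt : forall m i j a (x : G m.+1), 1 <= i -> i < j -> j <= m.+2 ->
    face m.+1 i a (degen m.+1 j x) = degen m j.-1 (face m i a x);
  ax_face_degen_gt : forall m i j a (x : G m.+1), 1 <= j -> j < i -> i <= m.+2 ->
    face m.+1 i a (degen m.+1 j x) = degen m j (face m i.-1 a x);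
  ax_face_degen_eq : forall m i a (x : G m), 1 <= i -> i <= m.+1 ->
    face m i a (degen m i x) = x;

  ax_conn_conn_lt : forall m i j a b (x : G m), 1 <= i -> i < j -> j <= m ->
    conn m.+1 i a (conn m j b x) = conn m.+1 j.+1 b (conn m i a x);
  ax_conn_conn_eq : forall m i a (x : G m), 1 <= i -> i <= m ->
    conn m.+1 i a (conn m i a x) = conn m.+1 i.+1 a (conn m i a x);
  ax_conn_degen_lt : forall m i j a (x : G m), 1 <= i -> i < j -> j <= m.+1 ->
    conn m.+1 i a (degen m j x) = degen m.+1 j.+1 (conn m i a x);
  ax_conn_degen_gt : forall m i j a (x : G m), 1 <= j -> j < i -> i <= m.+1 ->
    conn m.+1 i a (degen m j x) = degen m.+1 j (conn m i.-1 a x);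
  ax_conn_degen_eq : forall m j a (x : G m), 1 <= j -> j <= m.+1 ->
    conn m.+1 j a (degen m j x) = degen m.+1 j.+1 (degen m j x);
  ax_face_conn_lt : forall m i j a b (x : G m.+1), 1 <= i -> i < j -> j <= m.+1 ->
    face m.+1 i a (conn m.+1 j b x) = conn m j.-1 b (face m i a x);
  ax_face_conn_gt : forall m i j a b (x : G m.+1), 1 <= j -> j.+1 < i -> i <= m.+2 ->
    face m.+1 i a (conn m.+1 j b x) = conn m j b (face m i.-1 a x);
  ax_face_conn_same1 : forall m j a (x : G m), 1 <= j -> j <= m ->
    face m j a (conn m j a x) = x;
  ax_face_conn_same2 : forall m j a (x : G m), 1 <= j -> j <= m ->
    face m j.+1 a (conn m j a x) = x;
  ax_face_conn_opp1 : forall m j a (x : G m.+1), 1 <= j -> j <= m.+1 ->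
    face m.+1 j a (conn m.+1 j (~~ a) x) = degen m j (face m j a x);
  ax_face_conn_opp2 : forall m j a (x : G m.+1), 1 <= j -> j <= m.+1 ->
    face m.+1 j.+1 a (conn m.+1 j (~~ a) x) = degen m j (face m j a x);

  ax_face_comp_minus : forall k j (a b : G k.+1), 1 <= j -> j <= k.+1 ->
    face k j true a = face k j false b ->
    face k j false (comp k.+1 j a b) = face k j false a;
  ax_face_comp_plus : forall k j (a b : G k.+1), 1 <= j -> j <= k.+1 ->
    face k j true a = face k j false b ->
    face k j true (comp k.+1 j a b) = face k j true b;
  ax_face_comp_lt : forall k i j al (a b : G k.+1), 1 <= i -> i < j -> j <= k.+1 ->
    face k j true a = face k j false b ->
    face k i al (comp k.+1 j a b) = comp k j.-1 (face k i al a) (face k i al b);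
  ax_face_comp_gt : forall k i j al (a b : G k.+1), 1 <= j -> j < i -> i <= k.+1 ->
    face k j true a = face k j false b ->
    face k i al (comp k.+1 j a b) = comp k j (face k i al a) (face k i al b);
  ax_interchange : forall k i j (a b c d : G k.+1),
    1 <= i -> i <= k.+1 -> 1 <= j -> j <= k.+1 -> i != j ->
    face k i true a = face k i false b -> face k i true c = face k i false d ->
    face k j true a = face k j false c -> face k j true b = face k j false d ->
    comp k.+1 j (comp k.+1 i a b) (comp k.+1 i c d)
    = comp k.+1 i (comp k.+1 j a c) (comp k.+1 j b d);
  ax_degen_comp_le : forall k i j (a b : G k.+1), 1 <= i -> i <= j -> j <= k.+1 ->
    face k j true a = face k j false b ->
    degen k.+1 i (comp k.+1 j a b) = comp k.+2 j.+1 (degen k.+1 i a) (degen k.+1 i b);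
  ax_degen_comp_gt : forall k i j (a b : G k.+1), 1 <= j -> j < i -> i <= k.+2 ->
    face k j true a = face k j false b ->
    degen k.+1 i (comp k.+1 j a b) = comp k.+2 j (degen k.+1 i a) (degen k.+1 i b);
  ax_conn_comp_lt : forall k i j al (a b : G k.+1), 1 <= i -> i < j -> j <= k.+1 ->
    face k j true a = face k j false b ->
    conn k.+1 i al (comp k.+1 j a b) = comp k.+2 j.+1 (conn k.+1 i al a) (conn k.+1 i al b);
  ax_conn_comp_gt : forall k i j al (a b : G k.+1), 1 <= j -> j < i -> i <= k.+1 ->
    face k j true a = face k j false b ->
    conn k.+1 i al (comp k.+1 j a b) = comp k.+2 j (conn k.+1 i al a) (conn k.+1 i al b);
  ax_conn_comp_plus : forall k j (a b : G k.+1), 1 <= j -> j <= k.+1 ->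
    face k j true a = face k j false b ->
    conn k.+1 j true (comp k.+1 j a b)
    = comp k.+2 j.+1 (comp k.+2 j (conn k.+1 j true a) (degen k.+1 j a))
                     (comp k.+2 j (degen k.+1 j.+1 a) (conn k.+1 j true b));
  ax_conn_comp_minus : forall k j (a b : G k.+1), 1 <= j -> j <= k.+1 ->
    face k j true a = face k j false b ->
    conn k.+1 j false (comp k.+1 j a b)
    = comp k.+2 j.+1 (comp k.+2 j (conn k.+1 j false a) (degen k.+1 j.+1 b))
                     (comp k.+2 j (degen k.+1 j b) (conn k.+1 j false b));
  ax_comp_assoc : forall k j (a b c : G k.+1), 1 <= j -> j <= k.+1 ->
    face k j true a = face k j false b -> face k j true b = face k j false c ->
    comp k.+1 j (comp k.+1 j a b) c = comp k.+1 j a (comp k.+1 j b c);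
  ax_comp_id_l : forall k j (x : G k.+1), 1 <= j -> j <= k.+1 ->
    comp k.+1 j (degen k j (face k j false x)) x = x;
  ax_comp_id_r : forall k j (x : G k.+1), 1 <= j -> j <= k.+1 ->
    comp k.+1 j x (degen k j (face k j true x)) = x;
  ax_conn_inv1 : forall m i (x : G m), 1 <= i -> i <= m ->
    comp m.+1 i (conn m i true x) (conn m i false x) = degen m i.+1 x;
  ax_conn_inv2 : forall m i (x : G m), 1 <= i -> i <= m ->
    comp m.+1 i.+1 (conn m i true x) (conn m i false x) = degen m i x
}.

Arguments face {c0 m}.
Arguments degen {c0 m}.
Arguments conn {c0 m}.
Arguments comp {c0 m}.

Section Folding.
Variable C : CubCat.

Definition composable {k : nat} (j : nat) (a b : G C k.+1) : Prop :=
  face j true a = face j false b.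

Definition psi {k : nat} (i : nat) (x : G C k.+1) : G C k.+1 :=
  comp i.+1 (comp i.+1 (conn i true (face i.+1 false x)) x)
            (conn i false (face i.+1 true x)).

Definition psi_defined {k : nat} (i : nat) (x : G C k.+1) : Prop :=
  [/\ composable i.+1 (conn i true (face i.+1 false x)) x,
      composable i.+1 x (conn i false (face i.+1 true x)) &
      composable i.+1 (comp i.+1 (conn i true (face i.+1 false x)) x)
                      (conn i false (face i.+1 true x))].

(* A (k+2)-shell of elements of G_(k+1): z i a = z^a_i for 1 <= i <= k+2. *)
Definition is_shell {k : nat} (z : nat -> bool -> G C k.+1) : Prop :=
  forall i j a b, 1 <= i -> i < j -> j <= k.+2 ->
    face i a (z j b) = face j.-1 b (z i a).

Definition bd {m : nat} (x : G C m.+2) : nat -> bool -> G C m.+1 :=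
  fun i a => face i a x.

Definition psi_shell {m : nat} (j : nat) (z : nat -> bool -> G C m.+1) :
    nat -> bool -> G C m.+1 :=
  fun i a =>
    if i < j then psi j.-1 (z i a)
    else if i == j then
      (if a then comp j (z j.+1 false) (z j true)
            else comp j (z j false) (z j.+1 true))
    else if i == j.+1 then degen j (face j a (z j.+1 a))
    else psi j (z i a).

End Folding.
Arguments composable {C k}. Arguments psi {C k}. Arguments psi_defined {C k}. Arguments is_shell {C k}. Arguments bd {C m}. Arguments psi_shell {C m}.

(* Main.v *)
Require Import Defs.
From mathcomp Require Import all_boot zify.
Lemma psi_def (C : CubCat) k i (x : G C k.+1) : 1 <= i -> i <= k -> psi_defined i x.
Proof.
move=> h1 h2; rewrite /psi_defined /composable.
have e1 : face i.+1 true (conn i true (face i.+1 false x)) = face i.+1 false x.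
  by rewrite ax_face_conn_same2.
have e2 : face i.+1 false (conn i false (face i.+1 true x)) = face i.+1 true x.
  by rewrite ax_face_conn_same2.
split => //; rewrite ax_face_comp_plus //; lia.
Qed.
Lemma face_psi_lt (C : CubCat) k l i a (x : G C k.+2) :
  1 <= l -> l < i -> i <= k.+1 -> face l a (psi i x) = psi i.-1 (face l a x).
Proof.
move=> h1 h2 h3; case: (@psi_def C _ i x) => // [|d1 d2 d3]; first lia.
case: i h2 h3 d1 d2 d3 => [//|i] h2 h3 d1 d2 d3 /=.
rewrite /psi.
rewrite ax_face_comp_lt //; try lia.
rewrite ax_face_comp_lt //; try lia.
rewrite !ax_face_conn_lt //; try lia.
rewrite !(ax_face_face C _ l i.+2) //; lia.
Qed.

Lemma face_psi_gt (C : CubCat) k l i a (x : G C k.+2) :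
  1 <= i -> i.+1 < l -> l <= k.+2 -> face l a (psi i x) = psi i (face l a x).
Proof.
move=> h1 h2 h3; case: (@psi_def C _ i x) => // [|d1 d2 d3]; first lia.
rewrite /psi ax_face_comp_gt //; try lia.
rewrite ax_face_comp_gt //; try lia.
rewrite !ax_face_conn_gt //; try lia.
rewrite -!(ax_face_face C _ i.+1 l) //; lia.
Qed.

Lemma face_psi_minus (C : CubCat) k i (x : G C k.+1) :
  1 <= i -> i <= k -> face i false (psi i x) = Defs.comp i (face i false x) (face i.+1 true x).
Proof.
move=> h1 h2; case: (@psi_def C _ i x) => // d1 d2 d3.
case: k x h2 d1 d2 d3 => [|k] x h2 d1 d2 d3; first by exfalso; lia.
rewrite /psi ax_face_comp_lt //; try lia.
rewrite ax_face_comp_lt //; try lia.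
have oo := ax_face_conn_opp1 C _ _ false; simpl in oo; rewrite oo //; try lia.
rewrite ax_face_conn_same1 //.
rewrite (ax_face_face C _ i i.+1) //; try lia.
rewrite /= ax_comp_id_l //.
Qed.

Lemma face_psi_plus (C : CubCat) k i (x : G C k.+1) :
  1 <= i -> i <= k -> face i true (psi i x) = Defs.comp i (face i.+1 false x) (face i true x).
Proof.
move=> h1 h2; case: (@psi_def C _ i x) => // d1 d2 d3.
case: k x h2 d1 d2 d3 => [|k] x h2 d1 d2 d3; first by exfalso; lia.
rewrite /psi ax_face_comp_lt //; try lia.
rewrite ax_face_comp_lt //; try lia.
have oo := ax_face_conn_opp1 C _ _ true; simpl in oo; rewrite oo //; try lia.
rewrite ax_face_conn_same1 //.
have cab : face i true (face i.+1 false x) = face i false (face i true x).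
  by rewrite (ax_face_face C _ i i.+1).
rewrite (ax_face_face C _ i i.+1) //=.
rewrite -(ax_face_comp_plus C _ _ _ _ _ _ cab) //; try lia.
by rewrite ax_comp_id_r.
Qed.

Lemma face_psi_succ (C : CubCat) k i a (x : G C k.+2) :
  1 <= i -> i <= k.+1 -> face i.+1 a (psi i x) = degen i (face i a (face i.+1 a x)).
Proof.
move=> h1 h2; case: (@psi_def C _ i x) => // d1 d2 d3.
case: a.
  rewrite /psi ax_face_comp_plus //; try lia.
  by have oo := ax_face_conn_opp2 C _ _ true; simpl in oo; rewrite oo //; lia.
rewrite /psi ax_face_comp_minus //; try lia.
rewrite ax_face_comp_minus //; try lia.
by have oo := ax_face_conn_opp2 C _ _ false; simpl in oo; rewrite oo //; lia.
Qed.


Lemma case1 (C : CubCat) m j i i' a b (z : nat -> bool -> G C m.+2) : is_shell z ->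
  1 <= i -> i < i' -> i' < j -> j <= m.+2 ->
  face i a (psi j.-1 (z i' b)) = face i'.-1 b (psi j.-1 (z i a)).
Proof.
move=> zs h1 h2 h3 h4.
rewrite !face_psi_lt; try lia.
by rewrite (zs i i') //; lia.
Qed.

Lemma case2m (C : CubCat) m j i a (z : nat -> bool -> G C m.+1) : is_shell z ->
  1 <= i -> i < j -> j <= m.+1 ->
  face i a (Defs.comp j (z j false) (z j.+1 true)) = face j.-1 false (psi j.-1 (z i a)).
Proof.
move=> zs h1 h2 h3; case: j h2 h3 => [//|j] h2 h3 /=.
rewrite face_psi_minus; try lia.
rewrite ax_face_comp_lt //; try lia; last by rewrite (zs j.+1 j.+2) //; lia.
rewrite (zs i j.+1) //; try lia.
rewrite (zs i j.+2) //; lia.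
Qed.

Lemma case2p (C : CubCat) m j i a (z : nat -> bool -> G C m.+1) : is_shell z ->
  1 <= i -> i < j -> j <= m.+1 ->
  face i a (Defs.comp j (z j.+1 false) (z j true)) = face j.-1 true (psi j.-1 (z i a)).
Proof.
move=> zs h1 h2 h3; case: j h2 h3 => [//|j] h2 h3 /=.
rewrite face_psi_plus; try lia.
rewrite ax_face_comp_lt //; try lia; last by rewrite (zs j.+1 j.+2) //; lia.
rewrite (zs i j.+1) //; try lia.
rewrite (zs i j.+2) //; lia.
Qed.

Lemma case3 (C : CubCat) m j i a b (z : nat -> bool -> G C m.+2) : is_shell z ->
  1 <= i -> i < j -> j <= m.+2 ->
  face i a (degen j (face j b (z j.+1 b))) = face j.+1.-1 b (psi j.-1 (z i a)).
Proof.
move=> zs h1 h2 h3; case: j h2 h3 => [//|j] h2 h3 /=.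
rewrite face_psi_succ; try lia.
rewrite ax_face_degen_lt //; try lia.
rewrite (ax_face_face C _ i j.+1) //; try lia.
rewrite (zs i j.+2) //; lia.
Qed.

Lemma case4 (C : CubCat) m j i i' a b (z : nat -> bool -> G C m.+2) : is_shell z ->
  1 <= i -> i < j -> j.+1 < i' -> i' <= m.+3 ->
  face i a (psi j (z i' b)) = face i'.-1 b (psi j.-1 (z i a)).
Proof.
move=> zs h1 h2 h3 h4.
rewrite face_psi_lt; try lia.
rewrite face_psi_gt; try lia.
by rewrite (zs i i') //; lia.
Qed.

Lemma case5m (C : CubCat) m j b (z : nat -> bool -> G C m.+1) : is_shell z ->
  1 <= j -> j <= m.+1 ->
  face j false (degen j (face j b (z j.+1 b))) = face j.+1.-1 b (Defs.comp j (z j false) (z j.+1 true)).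
Proof.
move=> zs h1 h2 /=.
have cp : face j true (z j false) = face j false (z j.+1 true).
  by rewrite (zs j j.+1) //; lia.
rewrite ax_face_degen_eq //; try lia.
case: b.
  by rewrite ax_face_comp_plus.
rewrite ax_face_comp_minus //.
by rewrite (zs j j.+1) //; lia.
Qed.

Lemma case5p (C : CubCat) m j b (z : nat -> bool -> G C m.+1) : is_shell z ->
  1 <= j -> j <= m.+1 ->
  face j true (degen j (face j b (z j.+1 b))) = face j.+1.-1 b (Defs.comp j (z j.+1 false) (z j true)).
Proof.
move=> zs h1 h2 /=.
have cp : face j true (z j.+1 false) = face j false (z j true).
  by rewrite (zs j j.+1) //; lia.
rewrite ax_face_degen_eq //; try lia.
case: b.
  rewrite ax_face_comp_plus //.
  by rewrite (zs j j.+1) //; lia.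
by rewrite ax_face_comp_minus.
Qed.

Lemma case6m (C : CubCat) m j i' b (z : nat -> bool -> G C m.+1) : is_shell z ->
  1 <= j -> j.+1 < i' -> i' <= m.+2 ->
  face j false (psi j (z i' b)) = face i'.-1 b (Defs.comp j (z j false) (z j.+1 true)).
Proof.
move=> zs h1 h2 h3.
rewrite face_psi_minus; try lia.
rewrite ax_face_comp_gt //; try lia; last by rewrite (zs j j.+1) //; lia.
rewrite (zs j i') //; try lia.
rewrite (zs j.+1 i') //; lia.
Qed.

Lemma case6p (C : CubCat) m j i' b (z : nat -> bool -> G C m.+1) : is_shell z ->
  1 <= j -> j.+1 < i' -> i' <= m.+2 ->
  face j true (psi j (z i' b)) = face i'.-1 b (Defs.comp j (z j.+1 false) (z j true)).
Proof.
move=> zs h1 h2 h3.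
rewrite face_psi_plus; try lia.
rewrite ax_face_comp_gt //; try lia; last by rewrite (zs j j.+1) //; lia.
rewrite (zs j i') //; try lia.
rewrite (zs j.+1 i') //; lia.
Qed.

Lemma case7 (C : CubCat) m j i' a b (z : nat -> bool -> G C m.+2) : is_shell z ->
  1 <= j -> j.+1 < i' -> i' <= m.+3 ->
  face j.+1 a (psi j (z i' b)) = face i'.-1 b (degen j (face j a (z j.+1 a))).
Proof.
move=> zs h1 h2 h3.
rewrite face_psi_succ; try lia.
rewrite ax_face_degen_gt //; try lia.
rewrite (zs j.+1 i') //; try lia.
rewrite (ax_face_face C _ j i'.-1) //; lia.
Qed.

Lemma case8 (C : CubCat) m j i i' a b (z : nat -> bool -> G C m.+2) : is_shell z ->
  1 <= j -> j.+1 < i -> i < i' -> i' <= m.+3 ->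
  face i a (psi j (z i' b)) = face i'.-1 b (psi j (z i a)).
Proof.
move=> zs h1 h2 h3 h4.
rewrite !face_psi_gt; try lia.
by rewrite (zs i i') //; lia.
Qed.

Lemma shell_part (C : CubCat) (m j : nat) (z : nat -> bool -> G C m.+1) :
  1 <= j -> j <= m.+1 -> is_shell z -> is_shell (psi_shell j z).
Proof.
move=> j1 jm zs i i' a b hi hii' hi'.
rewrite /psi_shell.
case: a; case: b => /=;
do 6 (try (case: ifP => ?));
repeat match goal with H : is_true (?x == ?y) |- _ => move/eqP: H => H; subst end;
try (exfalso; lia).
all: first
  [ solve [eapply case2m; [exact zs | lia ..]]
  | solve [eapply case2p; [exact zs | lia ..]]
  | solve [eapply case5m; [exact zs | lia ..]]
  | solve [eapply case5p; [exact zs | lia ..]]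
  | solve [eapply case6m; [exact zs | lia ..]]
  | solve [eapply case6p; [exact zs | lia ..]]
  | destruct m as [|m]; [exfalso; lia|];
    first
    [ solve [eapply case1; [exact zs | lia ..]]
    | solve [eapply case3; [exact zs | lia ..]]
    | solve [eapply case4; [exact zs | lia ..]]
    | solve [eapply case7; [exact zs | lia ..]]
    | solve [eapply case8; [exact zs | lia ..]] ] ].
Qed.

Theorem proposition8p4 (C : CubCat) (m j : nat) :
  1 <= j -> j <= m.+1 ->
  (forall z : nat -> bool -> G C m.+1, is_shell z ->
     [/\ composable j (z j false) (z j.+1 true),
         composable j (z j.+1 false) (z j true),
         (forall i a, 1 <= i -> i < j -> psi_defined j.-1 (z i a)),
         (forall i a, j.+1 < i -> i <= m.+2 -> psi_defined j (z i a)) &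
         is_shell (psi_shell j z)]) /\
  (forall (x : G C m.+2) i a, 1 <= i -> i <= m.+2 ->
     psi_shell j (bd x) i a = face i a (psi j x)).
Proof.
move=> j1 jm; split.
  move=> z zs; split.
  - by rewrite /composable (zs j j.+1) //; lia.
  - by rewrite /composable (zs j j.+1) //; lia.
  - move=> i a h1 h2; apply: psi_def; lia.
  - move=> i a h1 h2; apply: psi_def; lia.
  - exact: shell_part.
move=> x i a h1 h2; rewrite /psi_shell /bd.
case: ifP => H1.
  by rewrite face_psi_lt //; lia.
case: ifP => /eqP H2.
  subst i; case: a.
    by rewrite face_psi_plus //; lia.
  by rewrite face_psi_minus //; lia.
case: ifP => /eqP H3.
  by subst i; rewrite face_psi_succ //; lia.
rewrite face_psi_gt //; lia.
Qed.
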